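(* Fix $\theta\in(\theta^-,\theta^+)$, $\boldsymbol{\kappa}=(\kappa_1,\dots,\kappa_4)\in\mathbb{R}^4$, $\delta\theta_{\mathbf{u}_0},\delta\theta_{\mathbf{v}_0}\in\mathbb{R}$ and $\boldsymbol{\omega}_{\mathbf{u}_0},\boldsymbol{\omega}_{\mathbf{v}_0}\in\mathbb{R}^3$. As $\ell\to0$ (all these parameters fixed), $$\mathbf{t}^{(\ell)}_{1,-,\mathbf{v}_0}-\mathbf{t}^{(\ell)}_{1,+},\quad\mathbf{t}^{(\ell)}_{3,-,\mathbf{v}_0}-\mathbf{t}^{(\ell)}_{3,+},\quad\mathbf{t}^{(\ell)}_{2,-,\mathbf{u}_0}-\mathbf{t}^{(\ell)}_{2,+},\quad\mathbf{t}^{(\ell)}_{4,-,\mathbf{u}_0}-\mathbf{t}^{(\ell)}_{4,+}$$ are all $O(\ell^2)$ if and only if (a) $\boldsymbol{\omega}_{\mathbf{u}_0}\times\mathbf{v}(\theta)+\delta\theta_{\mathbf{u}_0}\mathbf{v}'(\theta)=\boldsymbol{\omega}_{\mathbf{v}_0}\times\mathbf{u}(\theta)+\delta\theta_{\mathbf{v}_0}\mathbf{u}'(\theta)$ and $\boldsymbol{\omega}_{\mathbf{u}_0}\cdot\mathbf{v}'(\theta)=\boldsymbol{\omega}_{\mathbf{v}_0}\cdot\mathbf{u}'(\theta)$; and (b) $\boldsymbol{\kappa}=\mathbf{B}(\theta)(\boldsymbol{\omega}_{\mathbf{u}_0},\delta\theta_{\mathbf{u}_0},\boldsymbol{\omega}_{\mathbf{v}_0},\delta\theta_{\mathbf{v}_0})$,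 i.e. $\kappa_1=\frac{(\mathbf{t}_2\times\mathbf{t}_3)\cdot\boldsymbol{\omega}_{\mathbf{u}_0}+(\mathbf{t}_3\cdot\mathbf{t}_2')\delta\theta_{\mathbf{u}_0}}{V_{123}}$, $\kappa_2=\frac{(\mathbf{t}_3\times\mathbf{t}_4)\cdot\boldsymbol{\omega}_{\mathbf{v}_0}+(\mathbf{t}_3'\cdot\mathbf{t}_4)\delta\theta_{\mathbf{v}_0}}{V_{234}}$, $\kappa_3=\frac{(\mathbf{t}_4\times\mathbf{t}_1)\cdot\boldsymbol{\omega}_{\mathbf{u}_0}+(\mathbf{t}_1\cdot\mathbf{t}_4')\delta\theta_{\mathbf{u}_0}}{V_{314}}$, $\kappa_4=\frac{(\mathbf{t}_1\times\mathbf{t}_2)\cdot\boldsymbol{\omega}_{\mathbf{v}_0}+(\mathbf{t}_1'\cdot\mathbf{t}_2)\delta\theta_{\mathbf{v}_0}}{V_{421}}$ (all $\mathbf{t}_i$ evaluated at $\theta$). Moreover, condition (a) holds if and only if there are $k,\tau\in\mathbb{R}$ with $\boldsymbol{\omega}_{\mathbf{u}_0}=\tau\mathbf{u}(\theta)+k(\mathbf{u}'\cdot\mathbf{u})\mathbf{v}(\theta)+\frac{\delta\theta_{\mathbf{u}_0}\mathbf{v}'\cdot\mathbf{u}-\delta\theta_{\mathbf{v}_0}\mathbf{u}'\cdot\mathbf{u}}{\mathbf{e}_3\cdot(\mathbf{u}\times\mathbf{v})}\mathbf{e}_3$ and $\boldsymbol{\omega}_{\mathbf{v}_0}=k(\mathbf{v}'\cdot\mathbf{v})\mathbf{u}(\theta)-\tau\mathbf{v}(\theta)+\frac{\delta\theta_{\mathbf{u}_0}\mathbf{v}'\cdot\mathbf{v}-\delta\theta_{\mathbf{v}_0}\mathbf{u}'\cdot\mathbf{v}}{\mathbf{e}_3\cdot(\mathbf{u}\times\mathbf{v})}\mathbf{e}_3$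 (with $\mathbf{u},\mathbf{v},\mathbf{u}',\mathbf{v}'$ evaluated at $\theta$).
   Context: Design: $\mathbf{t}_1^r,\dots,\mathbf{t}_4^r\in\mathbb{R}^3$ with $\mathbf{t}_i^r\cdot(\mathbf{t}_j^r\times\mathbf{t}_k^r)\neq0$ for $ijk\in\{123,234,341,412\}$, non-self-intersecting, with $\mathbf{u}_0:=\mathbf{t}_1^r-\mathbf{t}_3^r$, $\mathbf{v}_0:=\mathbf{t}_2^r-\mathbf{t}_4^r$ orthogonal to $\mathbf{e}_3$, $\mathbf{e}_3\cdot(\mathbf{u}_0\times\mathbf{v}_0)>0$. $\mathbf{t}_i:(\theta^-,\theta^+)\to\mathbb{R}^3$ is the analytic mechanism parameterization of the cell (rigid folding preserving crease lengths, adjacent-crease angles and the signs of the triple products $\mathbf{t}_i\cdot(\mathbf{t}_j\times\mathbf{t}_k)$, $ijk\in\{123,234,341,412\}$, with $\mathbf{t}_i(0)=\mathbf{t}_i^r$, $\theta$ the change of dihedral angle at the $\mathbf{t}_4$ crease, normalized so that $\mathbf{u}(\theta):=\mathbf{t}_1(\theta)-\mathbf{t}_3(\theta)$ and $\mathbf{v}(\theta):=\mathbf{t}_2(\theta)-\mathbf{t}_4(\theta)$ are orthogonal to $\mathbf{e}_3$ with $\mathbf{e}_3\cdot(\mathbf{u}\times\mathbf{v})>0$); in particular $\mathbf{u}'\cdot\mathbf{u}$ and $\mathbf{v}'\cdot\mathbf{v}$ never vanish and $V_{ijk}(\theta):=\mathbf{t}_i(\theta)\cdot(\mathbf{t}_j(\theta)\times\mathbf{t}_k(\theta))\neq0$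 for distinct $i,j,k$. Primes are $d/d\theta$; $(\mathbf{a}\times)\mathbf{b}:=\mathbf{a}\times\mathbf{b}$. Bent boundary tangents (arguments $(\theta,\boldsymbol{\kappa})$ suppressed on the right): $\mathbf{t}^{(\ell)}_{1,-}=\mathbf{t}_1+\ell\kappa_4(\mathbf{t}_4\times\mathbf{t}_1)$, $\mathbf{t}^{(\ell)}_{1,+}=\mathbf{t}_1+\ell\kappa_1(\mathbf{t}_1\times\mathbf{t}_2)$, $\mathbf{t}^{(\ell)}_{2,-}=\mathbf{t}_2+\ell\kappa_2(\mathbf{t}_2\times\mathbf{t}_3)$, $\mathbf{t}^{(\ell)}_{2,+}=\mathbf{t}_2+\ell\kappa_1(\mathbf{t}_1\times\mathbf{t}_2)$, $\mathbf{t}^{(\ell)}_{3,-}=\mathbf{t}_3+\ell\kappa_3(\mathbf{t}_3\times\mathbf{t}_4)$, $\mathbf{t}^{(\ell)}_{3,+}=\mathbf{t}_3+\ell\kappa_2(\mathbf{t}_2\times\mathbf{t}_3)$, $\mathbf{t}^{(\ell)}_{4,-}=\mathbf{t}_4+\ell\kappa_3(\mathbf{t}_3\times\mathbf{t}_4)$, $\mathbf{t}^{(\ell)}_{4,+}=\mathbf{t}_4+\ell\kappa_4(\mathbf{t}_4\times\mathbf{t}_1)$, with $\mathbf{t}_i=\mathbf{t}_i(\theta)$. Neighbor tangents: $\mathbf{t}^{(\ell)}_{i,\pm,\mathbf{v}_0}:=(\mathbf{I}+\ell(\boldsymbol{\omega}_{\mathbf{v}_0}\times))\mathbf{t}^{(\ell)}_{i,\pm}(\theta+\ell\delta\theta_{\mathbf{v}_0},\boldsymbol{\kappa})$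 and $\mathbf{t}^{(\ell)}_{i,\pm,\mathbf{u}_0}:=(\mathbf{I}+\ell(\boldsymbol{\omega}_{\mathbf{u}_0}\times))\mathbf{t}^{(\ell)}_{i,\pm}(\theta+\ell\delta\theta_{\mathbf{u}_0},\boldsymbol{\kappa})$; the unsubscripted $\mathbf{t}^{(\ell)}_{i,+}$ means $\mathbf{t}^{(\ell)}_{i,+}(\theta,\boldsymbol{\kappa})$. *)

(* Defs.v *)
From Stdlib Require Import Reals.
From Coquelicot Require Import Coquelicot.
Open Scope R_scope.

Record vec3 := V3 { vx : R ; vy : R ; vz : R }.

Definition vadd (a b : vec3) : vec3 := V3 (vx a + vx b) (vy a + vy b) (vz a + vz b).
Definition vsub (a b : vec3) : vec3 := V3 (vx a - vx b) (vy a - vy b) (vz a - vz b).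
Definition vscal (c : R) (a : vec3) : vec3 := V3 (c * vx a) (c * vy a) (c * vz a).
Definition vzero : vec3 := V3 0 0 0.
Definition dot (a b : vec3) : R := vx a * vx b + vy a * vy b + vz a * vz b.
Definition cross (a b : vec3) : vec3 :=
  V3 (vy a * vz b - vz a * vy b) (vz a * vx b - vx a * vz b) (vx a * vy b - vy a * vx b).
Definition vnorm (a : vec3) : R := sqrt (dot a a).
Definition e3 : vec3 := V3 0 0 1.
Definition triple (a b c : vec3) : R := dot a (cross b c).

Definition vderiv (f : R -> vec3) (x : R) : vec3 :=
  V3 (Derive (fun s => vx (f s)) x) (Derive (fun s => vy (f s)) x) (Derive (fun s => vz (f s)) x).

Definition analytic_on (a b : R) (g : R -> R) : Prop :=
  forall x0, a < x0 < b ->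
    exists (c : nat -> R) (r : R), 0 < r /\
      forall x, a < x < b -> Rabs (x - x0) < r -> is_pseries c (x - x0) (g x).

Definition vanalytic_on (a b : R) (f : R -> vec3) : Prop :=
  analytic_on a b (fun s => vx (f s)) /\ analytic_on a b (fun s => vy (f s)) /\
  analytic_on a b (fun s => vz (f s)).

Definition in_tri (p a b : vec3) : Prop :=
  exists s r, 0 <= s /\ 0 <= r /\ s + r <= 1 /\ p = vadd (vscal s a) (vscal r b).
Definition in_seg (p a : vec3) : Prop := exists s, 0 <= s <= 1 /\ p = vscal s a.

Definition non_self_intersecting (t1 t2 t3 t4 : vec3) : Prop :=
  (forall p, in_tri p t1 t2 -> in_tri p t2 t3 -> in_seg p t2) /\
  (forall p, in_tri p t2 t3 -> in_tri p t3 t4 -> in_seg p t3) /\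
  (forall p, in_tri p t3 t4 -> in_tri p t4 t1 -> in_seg p t4) /\
  (forall p, in_tri p t4 t1 -> in_tri p t1 t2 -> in_seg p t1) /\
  (forall p, in_tri p t1 t2 -> in_tri p t3 t4 -> p = vzero) /\
  (forall p, in_tri p t2 t3 -> in_tri p t4 t1 -> p = vzero).

Definition design (r1 r2 r3 r4 : vec3) : Prop :=
  triple r1 r2 r3 <> 0 /\ triple r2 r3 r4 <> 0 /\ triple r3 r4 r1 <> 0 /\
  triple r4 r1 r2 <> 0 /\
  non_self_intersecting r1 r2 r3 r4 /\
  dot (vsub r1 r3) e3 = 0 /\ dot (vsub r2 r4) e3 = 0 /\
  0 < dot e3 (cross (vsub r1 r3) (vsub r2 r4)).

(** theta is the change of the (signed) dihedral angle at the t4 crease, between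
    the panels spanned by (t3,t4) and (t4,t1). *)
Definition dihedral_change_t4 (a b : R) (t1 t3 t4 : R -> vec3) : Prop :=
  exists phi0, forall s, a < s < b ->
    let na := cross (t3 s) (t4 s) in
    let nb := cross (t4 s) (t1 s) in
    dot na nb = vnorm na * vnorm nb * cos (phi0 + s) /\
    dot (t4 s) (cross na nb) = vnorm (t4 s) * vnorm na * vnorm nb * sin (phi0 + s).

Definition mechanism (a b : R) (r1 r2 r3 r4 : vec3) (t1 t2 t3 t4 : R -> vec3) : Prop :=
  a < 0 < b /\
  vanalytic_on a b t1 /\ vanalytic_on a b t2 /\ vanalytic_on a b t3 /\ vanalytic_on a b t4 /\
  t1 0 = r1 /\ t2 0 = r2 /\ t3 0 = r3 /\ t4 0 = r4 /\
  (forall s, a < s < b ->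
     dot (t1 s) (t1 s) = dot r1 r1 /\ dot (t2 s) (t2 s) = dot r2 r2 /\
     dot (t3 s) (t3 s) = dot r3 r3 /\ dot (t4 s) (t4 s) = dot r4 r4 /\
     dot (t1 s) (t2 s) = dot r1 r2 /\ dot (t2 s) (t3 s) = dot r2 r3 /\
     dot (t3 s) (t4 s) = dot r3 r4 /\ dot (t4 s) (t1 s) = dot r4 r1 /\
     0 < triple (t1 s) (t2 s) (t3 s) * triple r1 r2 r3 /\
     0 < triple (t2 s) (t3 s) (t4 s) * triple r2 r3 r4 /\
     0 < triple (t3 s) (t4 s) (t1 s) * triple r3 r4 r1 /\
     0 < triple (t4 s) (t1 s) (t2 s) * triple r4 r1 r2 /\
     (* normalization: u, v orthogonal to e3 and e3.(u x v) > 0 *)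
     dot (vsub (t1 s) (t3 s)) e3 = 0 /\ dot (vsub (t2 s) (t4 s)) e3 = 0 /\
     0 < dot e3 (cross (vsub (t1 s) (t3 s)) (vsub (t2 s) (t4 s)))) /\
  dihedral_change_t4 a b t1 t3 t4.

Definition bigO_l2 (F : R -> vec3) : Prop :=
  exists C d, 0 < d /\ forall l, 0 < l < d -> vnorm (F l) <= C * l ^ 2.

Definition nbr (l : R) (w : vec3) (dth : R) (f : R -> vec3) (th : R) : vec3 :=
  let x := f (th + l * dth) in vadd x (vscal l (cross w x)).

Definition t1m (t1 t2 t3 t4 : R -> vec3) (l k1 k2 k3 k4 : R) (s : R) : vec3 :=
  vadd (t1 s) (vscal (l * k4) (cross (t4 s) (t1 s))).
Definition t1p (t1 t2 t3 t4 : R -> vec3) (l k1 k2 k3 k4 : R) (s : R) : vec3 :=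
  vadd (t1 s) (vscal (l * k1) (cross (t1 s) (t2 s))).
Definition t2m (t1 t2 t3 t4 : R -> vec3) (l k1 k2 k3 k4 : R) (s : R) : vec3 :=
  vadd (t2 s) (vscal (l * k2) (cross (t2 s) (t3 s))).
Definition t2p (t1 t2 t3 t4 : R -> vec3) (l k1 k2 k3 k4 : R) (s : R) : vec3 :=
  vadd (t2 s) (vscal (l * k1) (cross (t1 s) (t2 s))).
Definition t3m (t1 t2 t3 t4 : R -> vec3) (l k1 k2 k3 k4 : R) (s : R) : vec3 :=
  vadd (t3 s) (vscal (l * k3) (cross (t3 s) (t4 s))).
Definition t3p (t1 t2 t3 t4 : R -> vec3) (l k1 k2 k3 k4 : R) (s : R) : vec3 :=
  vadd (t3 s) (vscal (l * k2) (cross (t2 s) (t3 s))).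
Definition t4m (t1 t2 t3 t4 : R -> vec3) (l k1 k2 k3 k4 : R) (s : R) : vec3 :=
  vadd (t4 s) (vscal (l * k3) (cross (t3 s) (t4 s))).
Definition t4p (t1 t2 t3 t4 : R -> vec3) (l k1 k2 k3 k4 : R) (s : R) : vec3 :=
  vadd (t4 s) (vscal (l * k4) (cross (t4 s) (t1 s))).

(* Main.v *)
Require Import Defs.
From Stdlib Require Import Reals Lra Psatz.
From Coquelicot Require Import Coquelicot.
Open Scope R_scope.

Definition exq (f : R -> R) (a b : R) : Prop :=
  exists d M, 0 < d /\ forall l, Rabs l < d -> exists q, Rabs q <= M /\ f l = a + l*b + l*l*q.

Lemma exq_const c : exq (fun _ => c) c 0.
Proof. exists 1, 0; split; [lra|]. intros l _; exists 0; split; [rewrite Rabs_R0; lra| ring]. Qed.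

Lemma exq_id : exq (fun l => l) 0 1.
Proof. exists 1, 0; split; [lra|]. intros l _; exists 0; split; [rewrite Rabs_R0; lra| ring]. Qed.

Lemma abs_add_le x y X Y : Rabs x <= X -> Rabs y <= Y -> Rabs (x+y) <= X + Y.
Proof. intros; eapply Rle_trans; [apply Rabs_triang|lra]. Qed.
Lemma abs_mul_le x y X Y : Rabs x <= X -> Rabs y <= Y -> Rabs (x*y) <= X * Y.
Proof. intros; rewrite Rabs_mult; apply Rmult_le_compat; auto using Rabs_pos. Qed.

Lemma exq_plus f g a b c d : exq f a b -> exq g c d -> exq (fun l => f l + g l) (a+c) (b+d).
Proof.
  intros (d1&M1&Hd1&H1) (d2&M2&Hd2&H2).
  exists (Rmin d1 d2), (M1+M2); split; [apply Rmin_pos; lra|].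
  intros l Hl. destruct (H1 l) as (q1&Hq1&E1). { eapply Rlt_le_trans; [apply Hl|apply Rmin_l]. }
  destruct (H2 l) as (q2&Hq2&E2). { eapply Rlt_le_trans; [apply Hl|apply Rmin_r]. }
  exists (q1+q2); split; [apply abs_add_le; auto| rewrite E1, E2; ring].
Qed.

Lemma exq_opp f a b : exq f a b -> exq (fun l => - f l) (-a) (-b).
Proof.
  intros (d1&M1&Hd1&H1). exists d1, M1; split; auto.
  intros l Hl. destruct (H1 l Hl) as (q1&Hq1&E1).
  exists (-q1); split; [rewrite Rabs_Ropp; auto| rewrite E1; ring].
Qed.

Lemma exq_minus f g a b c d : exq f a b -> exq g c d -> exq (fun l => f l - g l) (a-c) (b-d).
Proof.
  intros H1 H2. pose proof (exq_plus _ _ _ _ _ _ H1 (exq_opp _ _ _ H2)) as H.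
  destruct H as (d1&M1&Hd1&H). exists d1, M1; split; auto.
Qed.

Lemma exq_mult f g a b c d : exq f a b -> exq g c d -> exq (fun l => f l * g l) (a*c) (a*d+b*c).
Proof.
  intros (d1&M1&Hd1&H1) (d2&M2&Hd2&H2).
  exists (Rmin 1 (Rmin d1 d2)),
    (Rabs b * Rabs d + Rabs a * M2 + Rabs c * M1 + 1 * Rabs b * M2 + 1 * Rabs d * M1 + (1*1)*M1*M2).
  split; [apply Rmin_pos; [lra|apply Rmin_pos; lra]|].
  intros l Hl.
  assert (Hl1 : Rabs l <= 1) by (left; eapply Rlt_le_trans; [apply Hl|apply Rmin_l]).
  assert (Hl2 : Rabs l < Rmin d1 d2) by (eapply Rlt_le_trans; [apply Hl|apply Rmin_r]).
  destruct (H1 l) as (q1&Hq1&E1). { eapply Rlt_le_trans; [apply Hl2|apply Rmin_l]. }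
  destruct (H2 l) as (q2&Hq2&E2). { eapply Rlt_le_trans; [apply Hl2|apply Rmin_r]. }
  exists (b*d + a*q2 + c*q1 + l*b*q2 + l*d*q1 + (l*l)*q1*q2); split.
  - repeat apply abs_add_le; repeat apply abs_mul_le; auto; apply Rle_refl.
  - rewrite E1, E2; ring.
Qed.

Lemma exq_scale f a b c : exq f a b -> exq (fun l => f (l*c)) a (c*b).
Proof.
  intros (d1&M1&Hd1&H1).
  exists (d1/(Rabs c + 1)), (Rabs c * Rabs c * M1); split.
  { apply Rdiv_lt_0_compat; [lra| pose proof (Rabs_pos c); lra]. }
  intros l Hl. destruct (H1 (l*c)) as (q&Hq&E).
  { rewrite Rabs_mult. pose proof (Rabs_pos c). pose proof (Rabs_pos l).
    apply Rmult_lt_compat_r with (r:=Rabs c+1) in Hl; [|lra].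
    unfold Rdiv in Hl. rewrite Rmult_assoc, Rinv_l in Hl by lra. nra. }
  exists (c*c*q); split.
  - rewrite !Rabs_mult. apply Rmult_le_compat_l; auto. apply Rmult_le_pos; apply Rabs_pos.
  - rewrite E; ring.
Qed.

Lemma exq_loc f g a b d : 0 < d -> (forall l, Rabs l < d -> f l = g l) -> exq g a b -> exq f a b.
Proof.
  intros Hd Hfg (d1&M1&Hd1&H1). exists (Rmin d d1), M1; split; [apply Rmin_pos; lra|].
  intros l Hl. destruct (H1 l) as (q&Hq&E). { eapply Rlt_le_trans; [apply Hl|apply Rmin_r]. }
  exists q; split; auto. rewrite Hfg; auto. eapply Rlt_le_trans; [apply Hl|apply Rmin_l].
Qed.

Lemma small_zero b K d : 0 < d -> (forall l, 0 < l < d -> Rabs b <= K * l) -> b = 0.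
Proof.
  intros Hd H. destruct (Req_dec b 0) as [|Hb]; auto. exfalso.
  assert (Hp : 0 < Rabs b) by (apply Rabs_pos_lt; auto).
  set (K' := Rabs K + 1).
  assert (HK : 0 < K') by (unfold K'; pose proof (Rabs_pos K); lra).
  set (l := Rmin (d/2) (Rabs b / (2*K'))).
  assert (Hl0 : 0 < l) by (apply Rmin_pos; [lra| apply Rdiv_lt_0_compat; lra]).
  assert (Hl1 : l < d) by (eapply Rle_lt_trans; [apply Rmin_l| lra]).
  assert (Hl2 : l <= Rabs b / (2*K')) by apply Rmin_r.
  specialize (H l (conj Hl0 Hl1)).
  assert (K * l <= K' * l) by (unfold K'; pose proof (Rle_abs K); nra).
  assert (K' * l <= Rabs b / 2).
  { apply Rmult_le_compat_l with (r:=K') in Hl2; [|lra].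
    replace (K' * (Rabs b / (2*K'))) with (Rabs b / 2) in Hl2 by (field; lra). lra. }
  lra.
Qed.

Lemma exq_unique f a b a' b' : exq f a b -> exq f a' b' -> a = a' /\ b = b'.
Proof.
  intros (d1&M1&Hd1&H1) (d2&M2&Hd2&H2).
  assert (Ha : a = a').
  { destruct (H1 0) as (q1&_&E1); [rewrite Rabs_R0; lra|].
    destruct (H2 0) as (q2&_&E2); [rewrite Rabs_R0; lra|]. lra. }
  split; auto. subst a'.
  apply Rminus_diag_uniq. apply (small_zero _ (M1+M2) (Rmin d1 d2)); [apply Rmin_pos; lra|].
  intros l [Hl0 Hl].
  assert (Hla : Rabs l = l) by (apply Rabs_pos_eq; lra).
  destruct (H1 l) as (q1&Hq1&E1). { rewrite Hla; eapply Rlt_le_trans; [apply Hl|apply Rmin_l]. }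
  destruct (H2 l) as (q2&Hq2&E2). { rewrite Hla; eapply Rlt_le_trans; [apply Hl|apply Rmin_r]. }
  assert (E : b - b' = l * (q2 - q1)).
  { apply (Rmult_eq_reg_l l); [|lra]. rewrite E1 in E2. nra. }
  rewrite E, Rabs_mult, Hla.
  assert (Rabs (q2 - q1) <= M1 + M2).
  { unfold Rminus. eapply Rle_trans; [apply Rabs_triang|]. rewrite Rabs_Ropp. lra. }
  nra.
Qed.

Lemma lim0_bounded u : is_lim_seq u 0 -> exists M, forall n, Rabs (u n) <= M.
Proof.
  intros H. apply is_lim_seq_spec in H. destruct (H (mkposreal 1 Rlt_0_1)) as [N HN].
  assert (Hfin : forall N, exists M, forall n, (n < N)%nat -> Rabs (u n) <= M).
  { induction N0 as [|N0 [M IH]].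
    - exists 0; intros n Hn; lia.
    - exists (Rmax M (Rabs (u N0))). intros n Hn.
      destruct (Nat.eq_dec n N0) as [->|Hne]; [apply Rmax_r|].
      eapply Rle_trans; [apply IH; lia| apply Rmax_l]. }
  destruct (Hfin N) as [M HM]. exists (Rmax M 1). intros n.
  destruct (Nat.lt_ge_cases n N) as [Hl|Hl].
  - eapply Rle_trans; [apply HM; auto| apply Rmax_l].
  - specialize (HN n Hl). simpl in HN. rewrite Rminus_0_r in HN.
    eapply Rle_trans; [left; apply HN| apply Rmax_r].
Qed.

Lemma exq_Derive g x0 a b : exq (fun l => g (x0 + l)) a b -> Derive g x0 = b.
Proof.
  intros (d&M&Hd&H). apply is_derive_unique. apply is_derive_Reals.
  assert (Hg0 : g x0 = a).
  { destruct (H 0) as (q&_&E); [rewrite Rabs_R0; lra|]. rewrite Rplus_0_r in E. lra. }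
  intros eps Heps.
  assert (HM : 0 < Rabs M + 1) by (pose proof (Rabs_pos M); lra).
  assert (Hdl : 0 < Rmin d (eps / (Rabs M + 1))) by (apply Rmin_pos; [lra| apply Rdiv_lt_0_compat; lra]).
  exists (mkposreal _ Hdl). intros h Hh Hhd. simpl in Hhd.
  destruct (H h) as (q&Hq&E). { eapply Rlt_le_trans; [apply Hhd| apply Rmin_l]. }
  rewrite E, Hg0.
  replace ((a + h * b + h * h * q - a) / h - b) with (h * q) by (field; auto).
  rewrite Rabs_mult.
  assert (Hh2 : Rabs h < eps / (Rabs M + 1)) by (eapply Rlt_le_trans; [apply Hhd| apply Rmin_r]).
  assert (Rabs q <= Rabs M + 1) by (pose proof (Rle_abs M); lra).
  assert (Rabs h * (Rabs M + 1) < eps).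
  { apply Rmult_lt_compat_r with (r := Rabs M + 1) in Hh2; auto.
    unfold Rdiv in Hh2; rewrite Rmult_assoc, Rinv_l in Hh2; lra. }
  pose proof (Rabs_pos h). pose proof (Rabs_pos q). nra.
Qed.

Lemma analytic_exq a b g x0 : analytic_on a b g -> a < x0 < b ->
  exists d, exq (fun l => g (x0 + l)) (g x0) d.
Proof.
  intros Han Hx. destruct (Han x0 Hx) as (c & r & Hr & Hs).
  set (r' := Rmin r (Rmin (b - x0) (x0 - a))).
  assert (Hr' : 0 < r') by (apply Rmin_pos; [lra| apply Rmin_pos; lra]).
  assert (Hr1 : r' <= r) by apply Rmin_l.
  assert (Hr2 : r' <= b - x0) by (eapply Rle_trans; [apply Rmin_r| apply Rmin_l]).
  assert (Hr3 : r' <= x0 - a) by (eapply Rle_trans; [apply Rmin_r| apply Rmin_r]).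
  assert (HS : forall l, Rabs l < r' -> is_pseries c l (g (x0 + l))).
  { intros l Hl. assert (Hl' := Rabs_def2 _ _ Hl).
    replace l with (x0 + l - x0) at 1 by ring. apply Hs; [lra|].
    replace (x0 + l - x0) with l by ring. lra. }
  set (rho := r'/2).
  assert (Hrho : 0 < rho) by (unfold rho; lra).
  assert (Hexr : ex_pseries c rho).
  { exists (g (x0 + rho)). apply HS. rewrite Rabs_pos_eq; unfold rho; lra. }
  assert (HCV : Rbar_le rho (CV_radius c)).
  { destruct (CV_radius_bounded c) as [Hub _]. apply Hub.
    apply ex_series_lim_0 in Hexr. apply lim0_bounded in Hexr. destruct Hexr as [M HM].
    exists M. intros n. specialize (HM n). rewrite <- pow_n_pow. rewrite Rmult_comm. exact HM. }
  set (c2 := PS_decr_1 (PS_decr_1 c)).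
  assert (HCV2 : Rbar_le rho (CV_radius c2)) by (unfold c2; rewrite !CV_radius_decr_1; auto).
  assert (Hin : forall l, Rabs l < rho -> forall a, Rbar_le rho (CV_radius a) -> ex_pseries a l).
  { intros l Hl a0 Ha0. apply CV_radius_inside. eapply Rbar_lt_le_trans; [|apply Ha0]. simpl; auto. }
  assert (Hcont : continuity_pt (PSeries c2) 0).
  { apply PSeries_continuity. eapply Rbar_lt_le_trans; [|apply HCV2]. simpl. rewrite Rabs_R0; auto. }
  destruct (Hcont 1 Rlt_0_1) as (dc & Hdc & Hc).
  exists (c 1%nat).
  exists (Rmin rho dc), (Rabs (PSeries c2 0) + 1). split; [apply Rmin_pos; lra|].
  intros l Hl.
  assert (Hl1 : Rabs l < rho) by (eapply Rlt_le_trans; [apply Hl| apply Rmin_l]).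
  assert (Hl2 : Rabs l < dc) by (eapply Rlt_le_trans; [apply Hl| apply Rmin_r]).
  assert (Hgl : forall l, Rabs l < rho -> g (x0 + l) = c 0%nat + l * (c 1%nat + l * PSeries c2 l)).
  { intros l0 Hl0. rewrite <- (is_pseries_unique _ _ _ (HS l0 ltac:(unfold rho in Hl0; lra))).
    rewrite PSeries_decr_1 by (apply Hin; auto).
    rewrite PSeries_decr_1 by (apply Hin; auto; rewrite CV_radius_decr_1; auto).
    reflexivity. }
  exists (PSeries c2 l). split.
  - destruct (Req_dec l 0) as [->|Hl0]; [pose proof (Rle_abs (PSeries c2 0)); lra|].
    assert (Hcl : Rabs (PSeries c2 l - PSeries c2 0) < 1).
    { apply (Hc l). split; [split; [exact I| auto]|]. simpl. unfold R_dist. rewrite Rminus_0_r; auto. }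
    assert (Rabs (PSeries c2 l) <= Rabs (PSeries c2 l - PSeries c2 0) + Rabs (PSeries c2 0)).
    { replace (PSeries c2 l) with ((PSeries c2 l - PSeries c2 0) + PSeries c2 0) at 1 by ring.
      apply Rabs_triang. }
    lra.
  - rewrite (Hgl l Hl1). replace (g x0) with (g (x0 + 0)) by (rewrite Rplus_0_r; auto). rewrite (Hgl 0) by (rewrite Rabs_R0; auto). ring.
Qed.

Ltac vdes := repeat match goal with v : vec3 |- _ => destruct v end;
  unfold triple, dot, cross, vadd, vsub, vscal, vzero, e3 in *; simpl in *.

Definition Ev (P T w : vec3) (dth ka : R) (Ta Tb : vec3) (kb : R) (Tc Td : vec3) : vec3 :=
  vadd (vscal dth P) (vadd (cross w T) (vsub (vscal ka (cross Ta Tb)) (vscal kb (cross Tc Td)))).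

Lemma F_X2 (T1 T2 T3 P2 wu : vec3) k1 k2 dthu :
  let E2 := Ev P2 T2 wu dthu k2 T2 T3 k1 T1 T2 in
  triple T1 T2 T3 * dot wu P2 = dot P2 T1 * dot E2 T3 - dot P2 T3 * dot E2 T1
   + triple T1 T2 T3 * (k1 * dot P2 T1 + k2 * dot P2 T3) + dot P2 T2 * dot wu (cross T3 T1).
Proof. intros E; unfold E, Ev. vdes. ring. Qed.
Lemma F_X4 (T1 T3 T4 P4 wu : vec3) k3 k4 dthu :
  let E4 := Ev P4 T4 wu dthu k3 T3 T4 k4 T4 T1 in
  triple T1 T3 T4 * dot wu P4 = dot P4 T3 * dot E4 T1 - dot P4 T1 * dot E4 T3
   - triple T1 T3 T4 * (k3 * dot P4 T3 + k4 * dot P4 T1) + dot P4 T4 * dot wu (cross T1 T3).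
Proof. intros E; unfold E, Ev. vdes. ring. Qed.
Lemma F_Y1 (T1 T2 T4 P1 wv : vec3) k1 k4 dthv :
  let E1 := Ev P1 T1 wv dthv k4 T4 T1 k1 T1 T2 in
  triple T1 T2 T4 * dot wv P1 = dot P1 T4 * dot E1 T2 - dot P1 T2 * dot E1 T4
   - triple T1 T2 T4 * (k4 * dot P1 T4 + k1 * dot P1 T2) + dot P1 T1 * dot wv (cross T2 T4).
Proof. intros E; unfold E, Ev. vdes. ring. Qed.
Lemma F_Y3 (T2 T3 T4 P3 wv : vec3) k2 k3 dthv :
  let E3 := Ev P3 T3 wv dthv k3 T3 T4 k2 T2 T3 in
  triple T2 T3 T4 * dot wv P3 = dot P3 T2 * dot E3 T4 - dot P3 T4 * dot E3 T2
   + triple T2 T3 T4 * (k2 * dot P3 T2 + k3 * dot P3 T4) + dot P3 T3 * dot wv (cross T4 T2).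
Proof. intros E; unfold E, Ev. vdes. ring. Qed.
Lemma F_co (T1 T2 T3 T4 P1 P2 P3 P4 : vec3) :
  let V123 := triple T1 T2 T3 in let V124 := triple T1 T2 T4 in
  let V134 := triple T1 T3 T4 in let V234 := triple T2 T3 T4 in
  - dot P2 T3 * V124 * V134 - dot P4 T1 * V234 * V123 + dot P1 T2 * V234 * V134
  + dot P3 T4 * V123 * V124 =
  - V124 * V234 * dot (vsub P1 P3) (vsub T1 T3)
  - V124 * V134 * (dot P2 T3 + dot P3 T2) - V234 * V123 * (dot P4 T1 + dot P1 T4)
  + V124 * V234 * (dot P1 T1 + dot P3 T3) + V124 * V124 * dot P3 T3 + V234 * V234 * dot P1 T1.
Proof. intros. unfold V123, V124, V134, V234. vdes. Time ring. Qed.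

Lemma I_e23 (T1 T2 T3 P2 wu : vec3) k1 k2 dthu :
  dot (Ev P2 T2 wu dthu k2 T2 T3 k1 T1 T2) T3 = dot (cross T2 T3) wu + dot T3 P2 * dthu - k1 * triple T1 T2 T3.
Proof. unfold Ev; vdes; ring. Qed.
Lemma I_e34 (T2 T3 T4 P3 wv : vec3) k2 k3 dthv :
  dot (Ev P3 T3 wv dthv k3 T3 T4 k2 T2 T3) T4 = dot (cross T3 T4) wv + dot P3 T4 * dthv - k2 * triple T2 T3 T4.
Proof. unfold Ev; vdes; ring. Qed.
Lemma I_e41 (T1 T3 T4 P4 wu : vec3) k3 k4 dthu :
  dot (Ev P4 T4 wu dthu k3 T3 T4 k4 T4 T1) T1 = dot (cross T4 T1) wu + dot T1 P4 * dthu - k3 * triple T3 T1 T4.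
Proof. unfold Ev; vdes; ring. Qed.
Lemma I_e12 (T1 T2 T4 P1 wv : vec3) k1 k4 dthv :
  dot (Ev P1 T1 wv dthv k4 T4 T1 k1 T1 T2) T2 = dot (cross T1 T2) wv + dot P1 T2 * dthv - k4 * triple T4 T2 T1.
Proof. unfold Ev; vdes; ring. Qed.
Lemma I_self (P T w : vec3) dth ka Tb kb Tc :
  dot (Ev P T w dth ka Tb T kb T Tc) T = dth * dot P T.
Proof. unfold Ev; vdes; ring. Qed.
Lemma I_self' (P T w : vec3) dth ka Ta kb Td :
  dot (Ev P T w dth ka Ta T kb Td T) T = dth * dot P T.
Proof. unfold Ev; vdes; ring. Qed.
Lemma I_t314 (T1 T3 T4 : vec3) : triple T3 T1 T4 = - triple T1 T3 T4.
Proof. vdes; ring. Qed.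
Lemma I_t421 (T1 T2 T4 : vec3) : triple T4 T2 T1 = - triple T1 T2 T4.
Proof. vdes; ring. Qed.
Lemma I_Z (T1 T2 T3 T4 P1 P2 P3 P4 wu wv : vec3) k1 k2 k3 k4 dthu dthv :
  vsub (vsub (Ev P1 T1 wv dthv k4 T4 T1 k1 T1 T2) (Ev P3 T3 wv dthv k3 T3 T4 k2 T2 T3))
       (vsub (Ev P2 T2 wu dthu k2 T2 T3 k1 T1 T2) (Ev P4 T4 wu dthu k3 T3 T4 k4 T4 T1)) =
  vsub (vadd (cross wv (vsub T1 T3)) (vscal dthv (vsub P1 P3)))
       (vadd (cross wu (vsub T2 T4)) (vscal dthu (vsub P2 P4))).
Proof. unfold Ev; vdes; f_equal; ring. Qed.
Lemma I_R (wu wv P1 P2 P3 P4 : vec3) :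
  dot wu (vsub P2 P4) - dot wv (vsub P1 P3) = dot wu P2 - dot wu P4 - dot wv P1 + dot wv P3.
Proof. vdes; ring. Qed.
Lemma dot_zero_l X : dot vzero X = 0.
Proof. vdes. ring. Qed.
Lemma vsub_eq a b : vsub a b = vzero -> a = b.
Proof. vdes. intros H; injection H; intros; f_equal; lra. Qed.
Lemma vsub_eq' a b : a = b -> vsub a b = vzero.
Proof. intros ->. vdes. f_equal; ring. Qed.
Lemma vsub_zz : vsub vzero vzero = vzero.
Proof. vdes; f_equal; ring. Qed.
Lemma decomp a b c X Y : triple a b c * dot X Y = dot X a * dot (cross b c) Y + dot X b * dot (cross c a) Y + dot X c * dot (cross a b) Y.
Proof. vdes; ring. Qed.
Lemma basis_zero a b c X : triple a b c <> 0 -> dot X a = 0 -> dot X b = 0 -> dot X c = 0 -> X = vzero.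
Proof.
  intros Hv Ha Hb Hc.
  assert (H : forall Y, triple a b c * dot X Y = dot X a * dot (cross b c) Y + dot X b * dot (cross c a) Y + dot X c * dot (cross a b) Y)
    by (intros Y; apply decomp).
  rewrite Ha, Hb, Hc in H.
  assert (Hx := H (V3 1 0 0)). assert (Hy := H (V3 0 1 0)). assert (Hz := H (V3 0 0 1)).
  destruct X as [x y z]. unfold dot in Hx, Hy, Hz; simpl in Hx, Hy, Hz. unfold vzero.
  f_equal; apply (Rmult_eq_reg_l (triple a b c)); auto; lra.
Qed.
Lemma dot_vsub2 a b c d X : dot (vsub (vsub a b) (vsub c d)) X = dot a X - dot b X - dot c X + dot d X.
Proof. vdes; ring. Qed.
Lemma I_tr (a b c : vec3) : dot (cross a b) c = triple a b c.
Proof. vdes; ring. Qed.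
Lemma I_tr2 (a b c : vec3) : dot (cross b c) a = triple a b c.
Proof. vdes; ring. Qed.
Lemma I_tr3 (a b c : vec3) : dot (cross c a) b = triple a b c.
Proof. vdes; ring. Qed.
Lemma eq_div k X V : V <> 0 -> k * V = X -> k = X / V.
Proof. intros; subst; field; auto. Qed.

Lemma exq_ext f a b a' b' : exq f a b -> a = a' -> b = b' -> exq f a' b'.
Proof. intros H -> ->; auto. Qed.

Lemma comp_zero f b C d : 0 < d -> (forall l, 0 < l < d -> Rabs (f l) <= C * l ^ 2) -> exq f 0 b -> b = 0.
Proof.
  intros Hd HB (d1 & M1 & Hd1 & H1).
  apply (small_zero _ (C + M1) (Rmin d d1)); [apply Rmin_pos; lra|].
  intros l [Hl0 Hl].
  assert (Hla : Rabs l = l) by (apply Rabs_pos_eq; lra).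
  destruct (H1 l) as (q & Hq & E). { rewrite Hla; eapply Rlt_le_trans; [apply Hl| apply Rmin_r]. }
  specialize (HB l (conj Hl0 (Rlt_le_trans _ _ _ Hl (Rmin_l _ _)))).
  assert (Hlb : l * b = f l - l * l * q) by (rewrite E; ring).
  assert (Rabs (l * b) <= C * l^2 + M1 * l^2).
  { rewrite Hlb. unfold Rminus. eapply Rle_trans; [apply Rabs_triang|]. rewrite Rabs_Ropp.
    apply Rplus_le_compat; auto. rewrite Rabs_mult, Rabs_mult, Hla. simpl. nra. }
  rewrite Rabs_mult, Hla in H. simpl in H.
  apply (Rmult_le_reg_l l); [lra|]. nra.
Qed.

Lemma sqrt3_le x y z : sqrt (x * x + y * y + z * z) <= Rabs x + Rabs y + Rabs z.
Proof.
  pose proof (Rabs_pos x); pose proof (Rabs_pos y); pose proof (Rabs_pos z).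
  rewrite <- (sqrt_square (Rabs x + Rabs y + Rabs z)) by lra.
  apply sqrt_le_1_alt.
  assert (x * x = Rabs x * Rabs x) by (rewrite <- Rabs_mult; rewrite Rabs_pos_eq; nra).
  assert (y * y = Rabs y * Rabs y) by (rewrite <- Rabs_mult; rewrite Rabs_pos_eq; nra).
  assert (z * z = Rabs z * Rabs z) by (rewrite <- Rabs_mult; rewrite Rabs_pos_eq; nra).
  nra.
Qed.

Lemma abs_le_sqrt3 x y z : Rabs x <= sqrt (x * x + y * y + z * z).
Proof.
  rewrite <- sqrt_Rsqr_abs. apply sqrt_le_1_alt. unfold Rsqr. nra.
Qed.

Lemma bigO_iff (F : R -> vec3) E :
  exq (fun l => vx (F l)) 0 (vx E) -> exq (fun l => vy (F l)) 0 (vy E) ->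
  exq (fun l => vz (F l)) 0 (vz E) -> (bigO_l2 F <-> E = vzero).
Proof.
  intros Hx Hy Hz. split.
  - intros (C & d & Hd & HB). destruct E as [ex ey ez]; cbn [vx vy vz] in Hx, Hy, Hz. unfold vzero.
    unfold vnorm, dot in HB.
    f_equal.
    + apply (comp_zero (fun l => vx (F l)) _ C d Hd); auto. intros l Hl. eapply Rle_trans; [|apply (HB l Hl)]. apply abs_le_sqrt3.
    + apply (comp_zero (fun l => vy (F l)) _ C d Hd); auto. intros l Hl. eapply Rle_trans; [|apply (HB l Hl)].
      rewrite (Rplus_comm (vx (F l) * vx (F l))). apply abs_le_sqrt3.
    + apply (comp_zero (fun l => vz (F l)) _ C d Hd); auto. intros l Hl. eapply Rle_trans; [|apply (HB l Hl)].
      rewrite (Rplus_comm _ (vz (F l) * vz (F l))), <- Rplus_assoc. apply abs_le_sqrt3.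
  - intros ->. cbn [vx vy vz vzero] in Hx, Hy, Hz.
    destruct Hx as (d1 & M1 & Hd1 & H1). destruct Hy as (d2 & M2 & Hd2 & H2).
    destruct Hz as (d3 & M3 & Hd3 & H3).
    exists (M1 + M2 + M3), (Rmin d1 (Rmin d2 d3)). split; [repeat apply Rmin_pos; lra|].
    intros l [Hl0 Hl]. assert (Hla : Rabs l = l) by (apply Rabs_pos_eq; lra).
    assert (l < d1) by (eapply Rlt_le_trans; [apply Hl| apply Rmin_l]).
    assert (l < d2) by (eapply Rlt_le_trans; [apply Hl| eapply Rle_trans; [apply Rmin_r| apply Rmin_l]]).
    assert (l < d3) by (eapply Rlt_le_trans; [apply Hl| eapply Rle_trans; [apply Rmin_r| apply Rmin_r]]).
    destruct (H1 l) as (q1 & Hq1 & E1); [lra|]. destruct (H2 l) as (q2 & Hq2 & E2); [lra|].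
    destruct (H3 l) as (q3 & Hq3 & E3); [lra|].
    unfold vnorm, dot. eapply Rle_trans; [apply sqrt3_le|].
    rewrite E1, E2, E3. rewrite !Rmult_0_r, !Rplus_0_l, !Rabs_mult, Hla. simpl. nra.
Qed.

Lemma deriv_const f c a b d : 0 < d -> (forall l, Rabs l < d -> f l = c) -> exq f a b -> b = 0.
Proof.
  intros Hd Hf H. assert (H0 : exq f c 0) by (apply (exq_loc f (fun _ => c) c 0 d); auto; apply exq_const).
  destruct (exq_unique _ _ _ _ _ H H0); auto.
Qed.

Lemma base1 (f : R -> vec3) a b th : vanalytic_on a b f -> a < th < b ->
  exq (fun l => vx (f (th + l))) (vx (f th)) (vx (vderiv f th)) /\
  exq (fun l => vy (f (th + l))) (vy (f th)) (vy (vderiv f th)) /\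
  exq (fun l => vz (f (th + l))) (vz (f th)) (vz (vderiv f th)).
Proof.
  intros (Hx & Hy & Hz) Hth.
  destruct (analytic_exq _ _ _ _ Hx Hth) as [dx Ex].
  destruct (analytic_exq _ _ _ _ Hy Hth) as [dy Ey].
  destruct (analytic_exq _ _ _ _ Hz Hth) as [dz Ez].
  pose proof (exq_Derive (fun s => vx (f s)) th _ _ Ex) as Dx.
  pose proof (exq_Derive (fun s => vy (f s)) th _ _ Ey) as Dy.
  pose proof (exq_Derive (fun s => vz (f s)) th _ _ Ez) as Dz.
  unfold vderiv; simpl. rewrite Dx, Dy, Dz. auto.
Qed.

Lemma base2 (f : R -> vec3) a b th c : vanalytic_on a b f -> a < th < b ->
  exq (fun l => vx (f (th + l * c))) (vx (f th)) (c * vx (vderiv f th)) /\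
  exq (fun l => vy (f (th + l * c))) (vy (f th)) (c * vy (vderiv f th)) /\
  exq (fun l => vz (f (th + l * c))) (vz (f th)) (c * vz (vderiv f th)).
Proof.
  intros H Hth. destruct (base1 f a b th H Hth) as (Ex & Ey & Ez).
  repeat split; apply (exq_scale (fun h => _ (f (th + h)))); auto.
Qed.

Ltac exs := first [ eassumption | apply exq_const | apply exq_id
  | (apply exq_plus; [exs|exs]) | (apply exq_minus; [exs|exs])
  | (apply exq_mult; [exs|exs]) | (apply exq_opp; exs) ].

Lemma vderiv_sub (f g : R -> vec3) a b th : vanalytic_on a b f -> vanalytic_on a b g -> a < th < b ->
  vderiv (fun x => vsub (f x) (g x)) th = vsub (vderiv f th) (vderiv g th).
Proof.
  intros Hf Hg Hth.
  destruct (base1 f a b th Hf Hth) as (fx & fy & fz).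
  destruct (base1 g a b th Hg Hth) as (gx & gy & gz).
  unfold vderiv at 1. transitivity (V3 (vx (vderiv f th) - vx (vderiv g th)) (vy (vderiv f th) - vy (vderiv g th)) (vz (vderiv f th) - vz (vderiv g th))); [|reflexivity]. f_equal.
  - apply (exq_Derive _ th (vx (f th) - vx (g th))). exact (exq_minus _ _ _ _ _ _ fx gx).
  - apply (exq_Derive _ th (vy (f th) - vy (g th))). exact (exq_minus _ _ _ _ _ _ fy gy).
  - apply (exq_Derive _ th (vz (f th) - vz (g th))). exact (exq_minus _ _ _ _ _ _ fz gz).
Qed.

Lemma core1  (T1 T2 T3 T4 P1 P2 P3 P4 wu wv : vec3) (k1 k2 k3 k4 dthu dthv : R)
(c1 : dot P1 T1 = 0) (c2 : dot P2 T2 = 0) (c3 : dot P3 T3 = 0) (c4 : dot P4 T4 = 0)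
  (a12 : dot P1 T2 + dot P2 T1 = 0) (a23 : dot P2 T3 + dot P3 T2 = 0)
  (a34 : dot P3 T4 + dot P4 T3 = 0) (a41 : dot P4 T1 + dot P1 T4 = 0)
  (nV123 : triple T1 T2 T3 <> 0) (nV124 : triple T1 T2 T4 <> 0)
  (nV134 : triple T1 T3 T4 <> 0) (nV234 : triple T2 T3 T4 <> 0)
  (nuu : dot (vsub P1 P3) (vsub T1 T3) <> 0) :
  let E1 := Ev P1 T1 wv dthv k4 T4 T1 k1 T1 T2 in
  let E3 := Ev P3 T3 wv dthv k3 T3 T4 k2 T2 T3 in
  let E2 := Ev P2 T2 wu dthu k2 T2 T3 k1 T1 T2 in
  let E4 := Ev P4 T4 wu dthu k3 T3 T4 k4 T4 T1 in
  (E1 = vzero /\ E3 = vzero /\ E2 = vzero /\ E4 = vzero) <->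
  ((vadd (cross wu (vsub T2 T4)) (vscal dthu (vsub P2 P4)) =
    vadd (cross wv (vsub T1 T3)) (vscal dthv (vsub P1 P3)) /\
    dot wu (vsub P2 P4) = dot wv (vsub P1 P3)) /\
   (k1 = (dot (cross T2 T3) wu + dot T3 P2 * dthu) / triple T1 T2 T3 /\
    k2 = (dot (cross T3 T4) wv + dot P3 T4 * dthv) / triple T2 T3 T4 /\
    k3 = (dot (cross T4 T1) wu + dot T1 P4 * dthu) / triple T3 T1 T4 /\
    k4 = (dot (cross T1 T2) wv + dot P1 T2 * dthv) / triple T4 T2 T1)).
Proof.
  intros E1 E3 E2 E4.
  assert (e23 : dot E2 T3 = dot (cross T2 T3) wu + dot T3 P2 * dthu - k1 * triple T1 T2 T3)
    by apply I_e23.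
  assert (e34 : dot E3 T4 = dot (cross T3 T4) wv + dot P3 T4 * dthv - k2 * triple T2 T3 T4)
    by apply I_e34.
  assert (e41 : dot E4 T1 = dot (cross T4 T1) wu + dot T1 P4 * dthu - k3 * triple T3 T1 T4)
    by apply I_e41.
  assert (e12 : dot E1 T2 = dot (cross T1 T2) wv + dot P1 T2 * dthv - k4 * triple T4 T2 T1)
    by apply I_e12.
  assert (s1 : dot E1 T1 = dthv * dot P1 T1) by (unfold E1, Ev; vdes; ring).
  assert (s2 : dot E2 T2 = dthu * dot P2 T2) by (unfold E2, Ev; vdes; ring).
  assert (s3 : dot E3 T3 = dthv * dot P3 T3) by (unfold E3, Ev; vdes; ring).
  assert (s4 : dot E4 T4 = dthu * dot P4 T4) by (unfold E4, Ev; vdes; ring).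
  rewrite c1 in s1; rewrite c2 in s2; rewrite c3 in s3; rewrite c4 in s4.
  rewrite Rmult_0_r in s1, s2, s3, s4.
  assert (t314 : triple T3 T1 T4 = - triple T1 T3 T4) by apply I_t314.
  assert (t421 : triple T4 T2 T1 = - triple T1 T2 T4) by apply I_t421.
  assert (nV314 : triple T3 T1 T4 <> 0) by (rewrite t314; auto using Ropp_neq_0_compat).
  assert (nV421 : triple T4 T2 T1 <> 0) by (rewrite t421; auto using Ropp_neq_0_compat).
  assert (HZ : vsub (vsub E1 E3) (vsub E2 E4) =
     vsub (vadd (cross wv (vsub T1 T3)) (vscal dthv (vsub P1 P3)))
          (vadd (cross wu (vsub T2 T4)) (vscal dthu (vsub P2 P4))))
    by apply I_Z.
  assert (HR : dot wu (vsub P2 P4) - dot wv (vsub P1 P3) =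
     dot wu P2 - dot wu P4 - dot wv P1 + dot wv P3) by apply I_R.
  pose proof (F_X2 T1 T2 T3 P2 wu k1 k2 dthu) as X2. cbv zeta in X2. fold E2 in X2.
  pose proof (F_X4 T1 T3 T4 P4 wu k3 k4 dthu) as X4. cbv zeta in X4. fold E4 in X4.
  pose proof (F_Y1 T1 T2 T4 P1 wv k1 k4 dthv) as Y1. cbv zeta in Y1. fold E1 in Y1.
  pose proof (F_Y3 T2 T3 T4 P3 wv k2 k3 dthv) as Y3. cbv zeta in Y3. fold E3 in Y3.
  rewrite c2 in X2; rewrite c4 in X4; rewrite c1 in Y1; rewrite c3 in Y3.
  assert (r21 : dot P2 T1 = - dot P1 T2) by lra.
  assert (r32 : dot P3 T2 = - dot P2 T3) by lra.
  assert (r43 : dot P4 T3 = - dot P3 T4) by lra.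
  assert (r14 : dot P1 T4 = - dot P4 T1) by lra.
  rewrite r21 in X2; rewrite r43 in X4; rewrite r14 in Y1; rewrite r32 in Y3.
  split.
  - intros [H1 [H3 [H2 H4]]].
    assert (z : forall X, dot vzero X = 0) by apply dot_zero_l.
    split; [split|].
    + apply vsub_eq. rewrite H1, H2, H3, H4 in HZ.
      assert (HZ' : vsub (vadd (cross wv (vsub T1 T3)) (vscal dthv (vsub P1 P3)))
          (vadd (cross wu (vsub T2 T4)) (vscal dthu (vsub P2 P4))) = vzero)
        by (rewrite <- HZ; unfold vsub, vzero; simpl; f_equal; ring).
      apply vsub_eq in HZ'. rewrite HZ'. apply vsub_eq'. reflexivity.
    + rewrite H2, !z in X2. rewrite H4, !z in X4. rewrite H1, !z in Y1. rewrite H3, !z in Y3.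
      apply Rminus_diag_uniq. rewrite HR.
      apply (Rmult_eq_reg_l (triple T1 T2 T3 * triple T1 T3 T4 * triple T1 T2 T4 * triple T2 T3 T4)).
      2:{ repeat apply Rmult_integral_contrapositive_currified; auto. }
      transitivity (triple T1 T3 T4 * triple T1 T2 T4 * triple T2 T3 T4 * (triple T1 T2 T3 * dot wu P2)
         - triple T1 T2 T3 * triple T1 T2 T4 * triple T2 T3 T4 * (triple T1 T3 T4 * dot wu P4)
         - triple T1 T2 T3 * triple T1 T3 T4 * triple T2 T3 T4 * (triple T1 T2 T4 * dot wv P1)
         + triple T1 T2 T3 * triple T1 T3 T4 * triple T1 T2 T4 * (triple T2 T3 T4 * dot wv P3)).
      { ring. }
      rewrite X2, X4, Y1, Y3. ring.
    + rewrite H2, z in e23. rewrite H3, z in e34. rewrite H4, z in e41. rewrite H1, z in e12.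
      repeat split; apply eq_div; auto; lra.
  - intros [[HA HAs] [B1 [B2 [B3 B4]]]].
    assert (z23 : dot E2 T3 = 0) by (rewrite e23, B1; field; auto).
    assert (z34 : dot E3 T4 = 0) by (rewrite e34, B2; field; auto).
    assert (z41 : dot E4 T1 = 0) by (rewrite e41, B3; field; auto).
    assert (z12 : dot E1 T2 = 0) by (rewrite e12, B4; field; auto).
    rewrite HA in HZ. rewrite (vsub_eq' _ _ eq_refl) in HZ.
    assert (ZT : forall T, dot E1 T - dot E3 T - dot E2 T + dot E4 T = 0).
    { intros T. rewrite <- dot_vsub2, HZ. apply dot_zero_l. }
    pose proof (ZT T1) as Z1. pose proof (ZT T2) as Z2. pose proof (ZT T3) as Z3. pose proof (ZT T4) as Z4.
    rewrite ?s1, ?s2, ?s3, ?s4, ?z23, ?z34, ?z41, ?z12 in Z1.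
    rewrite ?s1, ?s2, ?s3, ?s4, ?z23, ?z34, ?z41, ?z12 in Z2.
    rewrite ?s1, ?s2, ?s3, ?s4, ?z23, ?z34, ?z41, ?z12 in Z3.
    rewrite ?s1, ?s2, ?s3, ?s4, ?z23, ?z34, ?z41, ?z12 in Z4.
    assert (f24 : dot E2 T4 = dot E1 T4) by lra.
    assert (f31 : dot E3 T1 = - dot E2 T1) by lra.
    assert (f13 : dot E1 T3 = - dot E4 T3) by lra.
    pose proof (decomp T1 T2 T3 E2 T4) as D2. rewrite s2, z23, (I_tr T2 T3 T4), f24 in D2.
    pose proof (decomp T2 T3 T4 E3 T1) as D3. rewrite s3, z34, (I_tr2 T1 T3 T4), f31 in D3.
    pose proof (decomp T1 T2 T4 E1 T3) as D1. rewrite s1, z12, (I_tr T1 T2 T3), f13 in D1.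
    apply Rminus_diag_eq in HAs. rewrite HR in HAs.
    rewrite z23 in X2. rewrite z41 in X4. rewrite z12 in Y1. rewrite z34 in Y3.
    pose proof (F_co T1 T2 T3 T4 P1 P2 P3 P4) as Hco. cbv zeta in Hco.
    rewrite a23, a41, c1, c3 in Hco.
    set (x := dot E2 T1) in *. set (e14 := dot E1 T4) in *. set (e43 := dot E4 T3) in *.
    set (e32 := dot E3 T2) in *.
    set (V123 := triple T1 T2 T3) in *. set (V124 := triple T1 T2 T4) in *.
    set (V134 := triple T1 T3 T4) in *. set (V234 := triple T2 T3 T4) in *.
    set (p12 := dot P1 T2) in *. set (p23 := dot P2 T3) in *.
    set (p34 := dot P3 T4) in *. set (p41 := dot P4 T1) in *.
    set (uu := dot (vsub P1 P3) (vsub T1 T3)) in *.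
    assert (R1 : V123 * e14 = x * V234) by (rewrite D2; ring).
    assert (R3 : V134 * e32 = - (V234 * x)).
    { transitivity (V234 * - x); [|ring]. rewrite D3. ring. }
    assert (R2 : V124 * e43 = - (x * V234)).
    { rewrite <- R1. transitivity (- (V124 * - e43)); [ring|]. rewrite D1. ring. }
    assert (HS : -V134*V124*V234*p23*x + V123*V124*V234*p41*e43 + V123*V134*V234*p12*e14
                 - V123*V134*V124*p34*e32 = 0).
    { apply (Rmult_eq_reg_l 1); [|lra]. rewrite Rmult_0_r.
      transitivity (V134*V124*V234*(V123*dot wu P2) - V123*V124*V234*(V134*dot wu P4)
        - V123*V134*V234*(V124*dot wv P1) + V123*V134*V124*(V234*dot wv P3)).
      { rewrite X2, X4, Y1, Y3. ring. }
      transitivity (V123*V134*V124*V234*(dot wu P2 - dot wu P4 - dot wv P1 + dot wv P3)); [ring|].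
      rewrite HAs. ring. }
    assert (Hid : V234*x*(-V124*V234*uu) = (-V134*V124*V234*p23*x + V123*V124*V234*p41*e43
        + V123*V134*V234*p12*e14 - V123*V134*V124*p34*e32)
        + V134*V234*p12*(x*V234 - V123*e14) + V123*V234*p41*(-(x*V234) - V124*e43)
        + V123*V124*p34*(V234*x + V134*e32)).
    { assert (Hco' : - p23 * V124 * V134 - p41 * V234 * V123 + p12 * V234 * V134 + p34 * V123 * V124
                = - V124 * V234 * uu) by (rewrite Hco; ring).
      rewrite <- Hco'. ring. }
    rewrite HS, R1, R2, R3 in Hid.
    assert (Hx : x = 0).
    { assert (Hp : V234*x*(-V124*V234*uu) = 0) by (rewrite Hid; ring).
      apply Rmult_integral in Hp. destruct Hp as [Hp|Hp].
      - apply Rmult_integral in Hp. destruct Hp as [Hp|Hp]; [contradiction|auto].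
      - exfalso. revert Hp. repeat apply Rmult_integral_contrapositive_currified; auto.
        apply Ropp_neq_0_compat; auto. }
    assert (H14 : e14 = 0).
    { apply (Rmult_eq_reg_l V123); auto. rewrite R1, Hx; ring. }
    assert (H32 : e32 = 0).
    { apply (Rmult_eq_reg_l V134); auto. rewrite R3, Hx; ring. }
    assert (H43 : e43 = 0).
    { apply (Rmult_eq_reg_l V124); auto. rewrite R2, Hx; ring. }
    repeat split.
    + apply (basis_zero T1 T2 T4); auto.
    + apply (basis_zero T2 T3 T4); auto.
    + apply (basis_zero T1 T2 T3); auto.
    + apply (basis_zero T1 T3 T4); auto.
Qed.

Lemma lincomb2 a1 b1 a2 b2 c1 c2 : a1 = b1 -> a2 = b2 -> c1 * (a1 - b1) + c2 * (a2 - b2) = 0.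
Proof. intros -> ->. ring. Qed.
Lemma mulc c a b : a = b -> c * a = c * b.
Proof. intros ->; ring. Qed.

Lemma core2 (u v u' v' wu wv : vec3) (dthu dthv : R)
 (hu : dot u e3 = 0) (hv : dot v e3 = 0) (hu' : dot u' e3 = 0) (hv' : dot v' e3 = 0)
 (hD : 0 < dot e3 (cross u v)) (huv : dot u' v + dot u v' = 0) (huu : dot u' u <> 0) :
 (vadd (cross wu v) (vscal dthu v') = vadd (cross wv u) (vscal dthv u') /\ dot wu v' = dot wv u') <->
 exists k tau : R,
   wu = vadd (vadd (vscal tau u) (vscal (k * dot u' u) v))
     (vscal ((dthu * dot v' u - dthv * dot u' u) / dot e3 (cross u v)) e3) /\
   wv = vadd (vadd (vscal (k * dot v' v) u) (vscal (- tau) v))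
     (vscal ((dthu * dot v' v - dthv * dot u' v) / dot e3 (cross u v)) e3).
Proof.
  destruct u as [ux uy uz], v as [vx vy vz], u' as [px py pz], v' as [qx qy qz],
    wu as [ax ay az], wv as [bx by0 bz].
  unfold dot, cross, e3, vadd, vscal in *; simpl in *.
  assert (uz = 0) by lra. assert (vz = 0) by lra. assert (pz = 0) by lra. assert (qz = 0) by lra.
  subst.
  assert (HD' : 0 * (uy * 0 - 0 * vy) + 0 * (0 * vx - ux * 0) + 1 * (ux * vy - uy * vx) = ux * vy - uy * vx) by ring.
  rewrite HD' in *. clear HD'.
  assert (HD : ux * vy - uy * vx <> 0) by lra.
  assert (Huu : px * ux + py * uy <> 0) by (intro H; apply huu; lra).
  split.
  - intros [HA HS]. injection HA; intros Ez Ey Ex.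
    exists ((ux * ay - uy * ax) / (ux * vy - uy * vx) / (px * ux + py * uy)),
      ((ax * vy - ay * vx) / (ux * vy - uy * vx)).
    assert (Hz : az * (ux * vy - uy * vx) = dthu * (qx * ux + qy * uy) - dthv * (px * ux + py * uy)).
    { pose proof (lincomb2 _ _ _ _ ux uy Ex Ey). lra. }
    assert (Hz2 : bz * (ux * vy - uy * vx) = dthu * (qx * vx + qy * vy) - dthv * (px * vx + py * vy)).
    { pose proof (lincomb2 _ _ _ _ vx vy Ex Ey). lra. }
    assert (Hd : ux * by0 - uy * bx = - (ax * vy - ay * vx)) by lra.
    assert (Hc : (bx * vy - by0 * vx) * (px * ux + py * uy) = (ux * ay - uy * ax) * (qx * vx + qy * vy)).
    { assert (I1 : (ux * vy - uy * vx) * (ax * qx + ay * qy + az * 0) = (ax * vy - ay * vx) * (ux * qx + uy * qy)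
                   + (ux * ay - uy * ax) * (vx * qx + vy * qy)) by ring.
      assert (I2 : (ux * vy - uy * vx) * (bx * px + by0 * py + bz * 0) = (bx * vy - by0 * vx) * (ux * px + uy * py)
                   + (ux * by0 - uy * bx) * (vx * px + vy * py)) by ring.
      rewrite HS in I1. rewrite Hd in I2.
      pose proof (mulc (ax * vy - ay * vx) _ _ huv). lra. }
    split; f_equal.
    + field; auto.
    + field; auto.
    + apply (Rmult_eq_reg_l (ux * vy - uy * vx)); auto. transitivity (az * (ux * vy - uy * vx)); [ring|]. rewrite Hz. field; auto.
    + apply (Rmult_eq_reg_l ((ux * vy - uy * vx) * (px * ux + py * uy + 0 * 0)));
        [|apply Rmult_integral_contrapositive_currified; auto; lra].
      transitivity ((bx * vy - by0 * vx) * (px * ux + py * uy) * ux + (ux * by0 - uy * bx) * (px * ux + py * uy) * vx).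
      { ring. }
      rewrite Hc, Hd. field. split; auto; lra.
    + apply (Rmult_eq_reg_l ((ux * vy - uy * vx) * (px * ux + py * uy + 0 * 0)));
        [|apply Rmult_integral_contrapositive_currified; auto; lra].
      transitivity ((bx * vy - by0 * vx) * (px * ux + py * uy) * uy + (ux * by0 - uy * bx) * (px * ux + py * uy) * vy).
      { ring. }
      rewrite Hc, Hd. field. split; auto; lra.
    + apply (Rmult_eq_reg_l (ux * vy - uy * vx)); auto. transitivity (bz * (ux * vy - uy * vx)); [ring|]. rewrite Hz2. field; auto.
  - intros (k & tau & Hwu & Hwv). injection Hwu; intros Ha3 Ha2 Ha1. injection Hwv; intros Hb3 Hb2 Hb1.
    subst ax ay az bx by0 bz. split.
    + f_equal; field; auto.
    + assert (E : forall z, z = 0 -> z = 0) by auto. 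
      apply Rminus_diag_uniq.
      transitivity (tau * (px * vx + py * vy + 0 * 0 + (ux * qx + uy * qy + 0 * 0))); [field; auto|].
      rewrite huv. ring.
Qed.

Theorem mainTheorem8
  (thm thp : R) (r1 r2 r3 r4 : vec3) (t1 t2 t3 t4 : R -> vec3)
  (Hdesign : design r1 r2 r3 r4)
  (Hmech : mechanism thm thp r1 r2 r3 r4 t1 t2 t3 t4)
  (Huu : forall s, thm < s < thp ->
     dot (vderiv (fun x => vsub (t1 x) (t3 x)) s) (vsub (t1 s) (t3 s)) <> 0)
  (Hvv : forall s, thm < s < thp ->
     dot (vderiv (fun x => vsub (t2 x) (t4 x)) s) (vsub (t2 s) (t4 s)) <> 0)
  (HV : forall s, thm < s < thp ->
     triple (t1 s) (t2 s) (t3 s) <> 0 /\ triple (t1 s) (t2 s) (t4 s) <> 0 /\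
     triple (t1 s) (t3 s) (t4 s) <> 0 /\ triple (t2 s) (t3 s) (t4 s) <> 0)
  (th : R) (Hth : thm < th < thp)
  (k1 k2 k3 k4 dthu dthv : R) (wu wv : vec3) :
  let u := fun x => vsub (t1 x) (t3 x) in
  let v := fun x => vsub (t2 x) (t4 x) in
  let u_ := u th in let v_ := v th in
  let u' := vderiv u th in let v' := vderiv v th in
  let T1 := t1 th in let T2 := t2 th in let T3 := t3 th in let T4 := t4 th in
  let condA :=
    vadd (cross wu v_) (vscal dthu v') = vadd (cross wv u_) (vscal dthv u') /\
    dot wu v' = dot wv u' in
  let condB :=
    k1 = (dot (cross T2 T3) wu + dot T3 (vderiv t2 th) * dthu) / triple T1 T2 T3 /\
    k2 = (dot (cross T3 T4) wv + dot (vderiv t3 th) T4 * dthv) / triple T2 T3 T4 /\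
    k3 = (dot (cross T4 T1) wu + dot T1 (vderiv t4 th) * dthu) / triple T3 T1 T4 /\
    k4 = (dot (cross T1 T2) wv + dot (vderiv t1 th) T2 * dthv) / triple T4 T2 T1 in
  ((bigO_l2 (fun l => vsub (nbr l wv dthv (t1m t1 t2 t3 t4 l k1 k2 k3 k4) th)
                           (t1p t1 t2 t3 t4 l k1 k2 k3 k4 th)) /\
    bigO_l2 (fun l => vsub (nbr l wv dthv (t3m t1 t2 t3 t4 l k1 k2 k3 k4) th)
                           (t3p t1 t2 t3 t4 l k1 k2 k3 k4 th)) /\
    bigO_l2 (fun l => vsub (nbr l wu dthu (t2m t1 t2 t3 t4 l k1 k2 k3 k4) th)
                           (t2p t1 t2 t3 t4 l k1 k2 k3 k4 th)) /\
    bigO_l2 (fun l => vsub (nbr l wu dthu (t4m t1 t2 t3 t4 l k1 k2 k3 k4) th)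
                           (t4p t1 t2 t3 t4 l k1 k2 k3 k4 th)))
   <-> condA /\ condB) /\
  (condA <->
   exists k tau : R,
     wu = vadd (vadd (vscal tau u_) (vscal (k * dot u' u_) v_))
               (vscal ((dthu * dot v' u_ - dthv * dot u' u_) / dot e3 (cross u_ v_)) e3) /\
     wv = vadd (vadd (vscal (k * dot v' v_) u_) (vscal (- tau) v_))
               (vscal ((dthu * dot v' v_ - dthv * dot u' v_) / dot e3 (cross u_ v_)) e3)).
Proof.
  cbv beta zeta.
  destruct Hmech as (Hab & An1 & An2 & An3 & An4 & _ & _ & _ & _ & Hcons & _).
  destruct (base1 t1 thm thp th An1 Hth) as (b1x & b1y & b1z).
  destruct (base1 t2 thm thp th An2 Hth) as (b2x & b2y & b2z).
  destruct (base1 t3 thm thp th An3 Hth) as (b3x & b3y & b3z).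
  destruct (base1 t4 thm thp th An4 Hth) as (b4x & b4y & b4z).
  assert (Hd0 : 0 < Rmin (thp - th) (th - thm)) by (apply Rmin_pos; lra).
  assert (Hloc : forall l, Rabs l < Rmin (thp - th) (th - thm) -> thm < th + l < thp).
  { intros l Hl. pose proof (Rmin_l (thp - th) (th - thm)). pose proof (Rmin_r (thp - th) (th - thm)).
    apply Rabs_def2 in Hl. lra. }
  pose proof (fun l Hl => Hcons (th + l) (Hloc l Hl)) as HC.
  assert (c1 : dot (vderiv t1 th) (t1 th) = 0).
  { eassert (H : exq (fun l => dot (t1 (th + l)) (t1 (th + l))) _ _) by (unfold dot; exs).
    apply (deriv_const _ (dot r1 r1) _ _ _ Hd0) in H; [unfold dot in *; lra|].
    intros l Hl; destruct (HC l Hl) as (h&_); exact h. }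
  assert (c2 : dot (vderiv t2 th) (t2 th) = 0).
  { eassert (H : exq (fun l => dot (t2 (th + l)) (t2 (th + l))) _ _) by (unfold dot; exs).
    apply (deriv_const _ (dot r2 r2) _ _ _ Hd0) in H; [unfold dot in *; lra|].
    intros l Hl; destruct (HC l Hl) as (_&h&_); exact h. }
  assert (c3 : dot (vderiv t3 th) (t3 th) = 0).
  { eassert (H : exq (fun l => dot (t3 (th + l)) (t3 (th + l))) _ _) by (unfold dot; exs).
    apply (deriv_const _ (dot r3 r3) _ _ _ Hd0) in H; [unfold dot in *; lra|].
    intros l Hl; destruct (HC l Hl) as (_&_&h&_); exact h. }
  assert (c4 : dot (vderiv t4 th) (t4 th) = 0).
  { eassert (H : exq (fun l => dot (t4 (th + l)) (t4 (th + l))) _ _) by (unfold dot; exs).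
    apply (deriv_const _ (dot r4 r4) _ _ _ Hd0) in H; [unfold dot in *; lra|].
    intros l Hl; destruct (HC l Hl) as (_&_&_&h&_); exact h. }
  assert (a12 : dot (vderiv t1 th) (t2 th) + dot (vderiv t2 th) (t1 th) = 0).
  { eassert (H : exq (fun l => dot (t1 (th + l)) (t2 (th + l))) _ _) by (unfold dot; exs).
    apply (deriv_const _ (dot r1 r2) _ _ _ Hd0) in H; [unfold dot in *; lra|].
    intros l Hl; destruct (HC l Hl) as (_&_&_&_&h&_); exact h. }
  assert (a23 : dot (vderiv t2 th) (t3 th) + dot (vderiv t3 th) (t2 th) = 0).
  { eassert (H : exq (fun l => dot (t2 (th + l)) (t3 (th + l))) _ _) by (unfold dot; exs).
    apply (deriv_const _ (dot r2 r3) _ _ _ Hd0) in H; [unfold dot in *; lra|].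
    intros l Hl; destruct (HC l Hl) as (_&_&_&_&_&h&_); exact h. }
  assert (a34 : dot (vderiv t3 th) (t4 th) + dot (vderiv t4 th) (t3 th) = 0).
  { eassert (H : exq (fun l => dot (t3 (th + l)) (t4 (th + l))) _ _) by (unfold dot; exs).
    apply (deriv_const _ (dot r3 r4) _ _ _ Hd0) in H; [unfold dot in *; lra|].
    intros l Hl; destruct (HC l Hl) as (_&_&_&_&_&_&h&_); exact h. }
  assert (a41 : dot (vderiv t4 th) (t1 th) + dot (vderiv t1 th) (t4 th) = 0).
  { eassert (H : exq (fun l => dot (t4 (th + l)) (t1 (th + l))) _ _) by (unfold dot; exs).
    apply (deriv_const _ (dot r4 r1) _ _ _ Hd0) in H; [unfold dot in *; lra|].
    intros l Hl; destruct (HC l Hl) as (_&_&_&_&_&_&_&h&_); exact h. }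
  assert (n13 : dot (vsub (vderiv t1 th) (vderiv t3 th)) e3 = 0).
  { eassert (H : exq (fun l => dot (vsub (t1 (th + l)) (t3 (th + l))) e3) _ _)
      by (unfold dot, vsub, e3; cbn [vx vy vz]; exs).
    apply (deriv_const _ 0 _ _ _ Hd0) in H; [unfold dot, vsub, e3 in *; cbn [vx vy vz] in *; lra|].
    intros l Hl; destruct (HC l Hl) as (_&_&_&_&_&_&_&_&_&_&_&_&h&_); exact h. }
  assert (n24 : dot (vsub (vderiv t2 th) (vderiv t4 th)) e3 = 0).
  { eassert (H : exq (fun l => dot (vsub (t2 (th + l)) (t4 (th + l))) e3) _ _)
      by (unfold dot, vsub, e3; cbn [vx vy vz]; exs).
    apply (deriv_const _ 0 _ _ _ Hd0) in H; [unfold dot, vsub, e3 in *; cbn [vx vy vz] in *; lra|].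
    intros l Hl; destruct (HC l Hl) as (_&_&_&_&_&_&_&_&_&_&_&_&_&h&_); exact h. }
  destruct (Hcons th Hth) as (_&_&_&_&_&_&_&_&_&_&_&_&m13&m24&mD).
  destruct (HV th Hth) as (nV123 & nV124 & nV134 & nV234).
  pose proof (Huu th Hth) as nuu.
  rewrite (vderiv_sub t1 t3 thm thp th An1 An3 Hth) in *.
  rewrite (vderiv_sub t2 t4 thm thp th An2 An4 Hth) in *.
  split.
  - destruct (base2 t1 thm thp th dthv An1 Hth) as (s1x & s1y & s1z).
    destruct (base2 t3 thm thp th dthv An3 Hth) as (s3x & s3y & s3z).
    destruct (base2 t4 thm thp th dthv An4 Hth) as (s4x & s4y & s4z).
    destruct (base2 t2 thm thp th dthu An2 Hth) as (u2x & u2y & u2z).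
    destruct (base2 t3 thm thp th dthu An3 Hth) as (u3x & u3y & u3z).
    destruct (base2 t4 thm thp th dthu An4 Hth) as (u4x & u4y & u4z).
    rewrite (bigO_iff _ (Ev (vderiv t1 th) (t1 th) wv dthv k4 (t4 th) (t1 th) k1 (t1 th) (t2 th))).
    2-4: unfold nbr, t1m, t1p, vsub, vadd, vscal, cross; cbn [vx vy vz];
         (eapply exq_ext; [exs | ring | unfold Ev, vadd, vscal, vsub, cross; cbn [vx vy vz]; ring]).
    rewrite (bigO_iff _ (Ev (vderiv t3 th) (t3 th) wv dthv k3 (t3 th) (t4 th) k2 (t2 th) (t3 th))).
    2-4: unfold nbr, t3m, t3p, vsub, vadd, vscal, cross; cbn [vx vy vz];
         (eapply exq_ext; [exs | ring | unfold Ev, vadd, vscal, vsub, cross; cbn [vx vy vz]; ring]).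
    rewrite (bigO_iff _ (Ev (vderiv t2 th) (t2 th) wu dthu k2 (t2 th) (t3 th) k1 (t1 th) (t2 th))).
    2-4: unfold nbr, t2m, t2p, vsub, vadd, vscal, cross; cbn [vx vy vz];
         (eapply exq_ext; [exs | ring | unfold Ev, vadd, vscal, vsub, cross; cbn [vx vy vz]; ring]).
    rewrite (bigO_iff _ (Ev (vderiv t4 th) (t4 th) wu dthu k3 (t3 th) (t4 th) k4 (t4 th) (t1 th))).
    2-4: unfold nbr, t4m, t4p, vsub, vadd, vscal, cross; cbn [vx vy vz];
         (eapply exq_ext; [exs | ring | unfold Ev, vadd, vscal, vsub, cross; cbn [vx vy vz]; ring]).
    apply core1; auto.
  - apply core2; auto.
    unfold dot, vsub in *; cbn [vx vy vz] in *. lra.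
Qed.
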